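(* For every configuration $\gamma_0$ one can (constructively) define: (a) a set of configurations $B(\gamma_0)$ with $\gamma_0\in B(\gamma_0)$, closed under $\mathrm{Step}^{(d)}$ and $\mathrm{Step}^{(p)}$ (if $\gamma\in B(\gamma_0)$ and $\gamma\to\gamma'$ is a d-step or a par-step then $\gamma'\in B(\gamma_0)$); (b) a set $D(\gamma_0)$ and a function $\Phi_{\gamma_0}:\Gamma\to D(\gamma_0)$ that does not depend on the $par$-variables (if $\gamma,\gamma'$ have the same $d$-values at all nodes then $\Phi_{\gamma_0}(\gamma)=\Phi_{\gamma_0}(\gamma')$); (c) a well-founded strict order $\prec_d$ on $D(\gamma_0)$, such that for all configurations $\gamma\in B(\gamma_0)$ and $\gamma'$ with $\gamma\xrightarrow{\mathrm{Step}^{(d)}}\gamma'$ we have $\Phi_{\gamma_0}(\gamma')\prec_d\Phi_{\gamma_0}(\gamma)$.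
   Context: Let $G$ be a finite, connected, undirected graph with node set $V$ and a distinguished node $r$ (the root). Each node $p$ has a fixed ordered list $N(p)$ of its neighbours. A configuration $\gamma$ assigns to each node $p$ a value $\gamma.p.d\in\mathbb N$ and a neighbour $\gamma.p.par\in N(p)$; $\Gamma$ denotes the set of configurations. For a non-root node $p$ let $Dist_p(\gamma)=\min\{\gamma.q.d+1 : q\in N(p)\}$. Algorithm BFS (Dolev et al.) has the following actions. Root: enabled iff $\gamma.r.d\neq 0$; executing it sets $r.d:=0$. Non-root $p$, action CD: enabled iff $\gamma.p.d\ne Dist_p(\gamma)$; executing sets $p.d:=Dist_p(\gamma)$. Non-root $p$, action CP: enabled iff $\gamma.p.d=Dist_p(\gamma)$ and $\gamma.q_0.d+1\neq\gamma.p.d$ where $q_0=\gamma.p.par$; executing sets $p.par$ to the first $q$ in $N(p)$ with $\gamma.q.d+1=\gamma.p.d$. A node is enabled if one of its actions is enabled. A step $\gamma\to\gamma'$ (unfair daemon) holds iff there is a nonempty set $S$ of nodes enabled in $\gamma$ such that $\gamma'$ is obtained by every $p\in S$ simultaneously executing its enabled action (evaluated in $\gamma$), all other nodes unchanged. $\mathrm{Step}^{(d)}$: steps with $\gamma.r.d=\gamma'.r.d$ and $\gamma.p.d\ne\gamma'.p.d$ for some node $p$. $\mathrm{Step}^{(p)}$: steps with $\gamma.p.d=\gamma'.p.d$ for all $p$. A strict order is well-founded if it has no infinite descending chain. *)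

(* Defs.v *)
From mathcomp Require Import all_boot.
Set Implicit Arguments. Unset Strict Implicit. Unset Printing Implicit Defensive.

(* Graph: nodes V (finite), symmetric irreflexive adjacency e, root r,
   ordered neighbour lists N p (uniq, members = neighbours). *)

Section BFS.
Variables (V : finType) (N : V -> seq V) (r : V).

Record config := Config {
  cd : V -> nat;
  cpar : V -> V;
  cpar_in : forall p, cpar p \in N p }.

(* Dist_p(g) = min { g.q.d + 1 : q in N(p) } (N p is nonempty for non-root
   nodes of a connected graph with >= 2 nodes). *)
Definition Dist (g : config) (p : V) : nat :=
  let l := [seq (cd g q).+1 | q <- N p] in foldr minn (head 0 l) l.

Definition enabled_root (g : config) : bool := cd g r != 0.
Definition enabled_CD (g : config) (p : V) : bool := cd g p != Dist g p.
Definition enabled_CP (g : config) (p : V) : bool :=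
  (cd g p == Dist g p) && ((cd g (cpar g p)).+1 != cd g p).

Definition enabled (g : config) (p : V) : bool :=
  if p == r then enabled_root g else enabled_CD g p || enabled_CP g p.

Definition first_par (g : config) (p : V) : V :=
  nth p (N p) (find (fun q => (cd g q).+1 == cd g p) (N p)).

Definition exec_d (g : config) (p : V) : nat :=
  if p == r then 0 else if enabled_CD g p then Dist g p else cd g p.
Definition exec_par (g : config) (p : V) : V :=
  if (p != r) && enabled_CP g p then first_par g p else cpar g p.

Definition Step (g g' : config) : Prop :=
  exists S : {set V}, S != set0 /\ (forall p, p \in S -> enabled g p) /\
    (forall p, cd g' p = (if p \in S then exec_d g p else cd g p) /\
               cpar g' p = (if p \in S then exec_par g p else cpar g p)).

Definition Step_d (g g' : config) : Prop :=
  Step g g' /\ cd g r = cd g' r /\ exists p, cd g p <> cd g' p.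

Definition Step_p (g g' : config) : Prop :=
  Step g g' /\ forall p, cd g p = cd g' p.

End BFS.

Definition strict_wf_order (D : Type) (lt : D -> D -> Prop) : Prop :=
  (forall x, ~ lt x x) /\ (forall x y z, lt x y -> lt y z -> lt x z) /\
  well_founded lt.

(* Main.v *)
Require Import Defs.
From mathcomp Require Import all_boot zify.
Set Implicit Arguments. Unset Strict Implicit. Unset Printing Implicit Defensive.

Definition numf (b : nat) (l : seq nat) := foldl (fun a x => a * b + x) 0 l.

Lemma foldl_shift b a l :
  foldl (fun a x => a * b + x) a l = a * b ^ size l + foldl (fun a x => a * b + x) 0 l.
Proof.
elim: l a => [|x l IH] a /=; first by rewrite muln1 addn0.
rewrite IH [in RHS]IH expnS mul0n add0n mulnDl mulnA; lia.
Qed.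

Lemma foldl_bound b l : 0 < b -> all (fun x => x < b) l ->
  foldl (fun a x => a * b + x) 0 l < b ^ size l.
Proof.
move=> b0; elim: l => [|x l IH] /=; first by [].
case/andP=> xb /IH H; rewrite mul0n add0n foldl_shift expnS.
have : x * b ^ size l + b ^ size l <= b * b ^ size l.
  by rewrite addnC -mulSn leq_mul2r xb orbT.
lia.
Qed.

Lemma numf_lex b pre x y s1 s2 : 0 < b -> x < y -> size s1 = size s2 ->
  all (fun z => z < b) s1 ->
  numf b (pre ++ x :: s1) < numf b (pre ++ y :: s2).
Proof.
move=> b0 xy hs hall; rewrite /numf !foldl_cat /=.
set a := foldl _ 0 pre.
rewrite (foldl_shift _ (a * b + x)) (foldl_shift _ (a * b + y)) -hs.
have H1 := foldl_bound b0 hall.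
set P := b ^ size s1 in H1 *.
have : (a * b + x).+1 * P <= (a * b + y) * P by rewrite leq_mul2r; apply/orP; right; lia.
lia.
Qed.

Lemma foldr_minn_le (a : nat) l y : y \in l -> foldr minn a l <= y.
Proof.
elim: l => //= z l IH; rewrite in_cons => /orP [/eqP->|/IH H].
  exact: geq_minl.
exact: leq_trans (geq_minr _ _) H.
Qed.

Lemma foldr_minn_cap (a k : nat) l :
  minn (foldr minn a l) k = foldr minn (minn a k) [seq minn x k | x <- l].
Proof. elim: l => //= z l <-; lia. Qed.

Definition DistF (V : finType) (N : V -> seq V) (d : V -> nat) (p : V) : nat :=
  let l := [seq (d q).+1 | q <- N p] in foldr minn (head 0 l) l.

Lemma DistF_le (V : finType) (N : V -> seq V) d p q : q \in N p -> DistF N d p <= (d q).+1.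
Proof. move=> Hq; apply: foldr_minn_le; exact: map_f. Qed.

Lemma foldr_head_cap (T : Type) (f1 f2 : T -> nat) K s :
  (forall x, minn (f1 x) K = minn (f2 x) K) ->
  minn (foldr minn (head 0 (map f1 s)) (map f1 s)) K =
  minn (foldr minn (head 0 (map f2 s)) (map f2 s)) K.
Proof.
move=> H; case: s => [|x s] //=.
rewrite -!/(foldr minn _ (_ :: _)) !foldr_minn_cap H.
by congr (foldr _ _ _); rewrite /= H; congr (_ :: _); rewrite -!map_comp; apply: eq_map => y /=.
Qed.

Lemma DistF_cap (V : finType) (N : V -> seq V) (d d' : V -> nat) v p :
  (forall q, minn (d q) v = minn (d' q) v) ->
  minn (DistF N d p) v.+1 = minn (DistF N d' p) v.+1.
Proof.
move=> H; rewrite /DistF; apply: foldr_head_cap => q.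
have E : forall y, minn (y.+1) v.+1 = (minn y v).+1 by move=> y; lia.
by rewrite !E H.
Qed.

Definition cnt (V : finType) (N : V -> seq V) (r : V) (d : V -> nat) v :=
  #|[set p | (p != r) && (d p == v) && (DistF N d p != v)]|.
Definition ncnt (V : finType) (d : V -> nat) v := #|[set p | d p == v]|.
Definition digit (V : finType) (N : V -> seq V) (r : V) (d : V -> nat) v :=
  cnt N r d v * (#|V|).+1 + (#|V| - ncnt d v).
Definition pot (V : finType) (N : V -> seq V) (r : V) (L : nat) (d : V -> nat) :=
  numf ((#|V|).+1 ^ 2) (map (digit N r d) (iota 0 L.+1)).

Lemma digit_lt (V : finType) (N : V -> seq V) r d v : digit N r d v < (#|V|).+1 ^ 2.
Proof.
rewrite /digit; have := max_card [set p | (p != r) && (d p == v) && (DistF N d p != v)].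
rewrite /cnt; set c := #|_|; move=> hc; nia.
Qed.

Lemma pot_step (V : finType) (N : V -> seq V) (r : V) (L : nat) (d d' : V -> nat) :
  (forall p, d p != d' p -> p != r /\ d' p = DistF N d p) ->
  (exists p, d p != d' p) ->
  (forall p, d p <= L) ->
  pot N r L d' < pot N r L d.
Proof.
move=> Hchg Hex HL.
pose P v := [exists p, (d p != d' p) && (minn (d p) (d' p) == v)].
have exP : exists v, P v.
  by case: Hex => p hp; exists (minn (d p) (d' p)); apply/existsP; exists p; rewrite hp eqxx.
case: (ex_minnP exP) => vs /existsP [p0 /andP [hp0 /eqP hm0]] hmin.
have Hag : forall q, minn (d q) vs = minn (d' q) vs.
  move=> q; case: (eqVneq (d q) (d' q)) => [->//|hq].
  have : vs <= minn (d q) (d' q) by apply: hmin; apply/existsP; exists q; rewrite hq eqxx.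
  lia.
have HD : forall p, minn (DistF N d p) vs.+1 = minn (DistF N d' p) vs.+1.
  by move=> p; apply: DistF_cap.
have vsL : vs <= L by have := HL p0; lia.
have Hpre : forall u, u < vs -> digit N r d u = digit N r d' u.
  move=> u hu; rewrite /digit /cnt /ncnt.
  have E1 : forall p, (d p == u) = (d' p == u).
    by move=> p; have := Hag p; move=> h; apply/eqP/eqP; lia.
  have E2 : forall p, (DistF N d p == u) = (DistF N d' p == u).
    by move=> p; have := HD p; move=> h; apply/eqP/eqP; lia.
  congr (_ * _ + (_ - _)); apply: eq_card => p; by rewrite !inE E1 ?E2.
have Hv : digit N r d' vs < digit N r d vs.
  have E2 : forall p, (DistF N d p == vs) = (DistF N d' p == vs).
    by move=> p; have := HD p; move=> h; apply/eqP/eqP; lia.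
  set A := [set p | (p != r) && (d p == vs) && (DistF N d p != vs)].
  set A' := [set p | (p != r) && (d' p == vs) && (DistF N d' p != vs)].
  have sub : A' \subset A.
    apply/subsetP => p; rewrite !inE => /andP [/andP [pr /eqP dp] ds].
    rewrite pr /=; case: (eqVneq (d p) (d' p)) => [->|hp]; first by rewrite dp eqxx E2.
    have [_ hd] := Hchg p hp; move: ds; by rewrite -E2 -hd dp eqxx.
  rewrite /digit /cnt -/A -/A'.
  have nV := max_card [set p | d' p == vs].
  have nV' := max_card [set p | d p == vs].
  rewrite /ncnt.
  case: (boolP [exists p, (d p == vs) && (d' p != vs)]).
    case/existsP => p /andP [/eqP dp dp'].
    have hp : d p != d' p by rewrite dp eq_sym.
    have [pr hd] := Hchg p hp.
    have pA : p \in A by rewrite inE pr dp eqxx /= -hd.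
    have pA' : p \notin A' by rewrite inE (negbTE dp') andbF.
    have : #|A'| < #|A|.
      apply: proper_card; apply/properP; split; [exact: sub | by exists p].
    nia.
  move=> /existsPn noleave.
  have eqA : A = A'.
    apply/eqP; rewrite eqEsubset sub andbT; apply/subsetP => p; rewrite !inE.
    case/andP => /andP [pr /eqP dp] ds; rewrite pr -E2 ds /= andbT.
    by have := noleave p; rewrite dp eqxx /= negbK.
  have : #|[set p | d p == vs]| < #|[set p | d' p == vs]|.
    apply: proper_card; apply/properP; split.
      apply/subsetP => p; rewrite !inE => hp; have := noleave p; by rewrite hp /= negbK.
    have hdp : d p0 != vs.
      apply/negP => /eqP h; have := noleave p0; rewrite h eqxx /= negbK => /eqP h'.
      by move: hp0; rewrite h h' eqxx.
    exists p0; last by rewrite inE.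
    rewrite inE; apply/eqP; move: hm0 hdp => <- /eqP; lia.
  rewrite eqA; lia.
rewrite /pot.
have -> : iota 0 L.+1 = iota 0 vs ++ vs :: iota vs.+1 (L - vs).
  have -> : L.+1 = vs + (L - vs).+1 by lia.
  by rewrite iotaD.
rewrite !map_cat /=.
have Epre : map (digit N r d) (iota 0 vs) = map (digit N r d') (iota 0 vs).
  apply/eq_in_map => u; rewrite mem_iota => /andP [_ hu]; apply: Hpre; lia.
rewrite Epre.
apply: numf_lex => //; first by rewrite !size_map.
by apply/allP => z /mapP [u _ ->]; apply: digit_lt.
Qed.

Definition Rset (V : finType) (e : rel V) (r : V) (k : nat) : {set V} :=
  iter k (fun A => A :|: [set q | [exists x in A, e x q]]) [set r].

Lemma Rset_path (V : finType) (e : rel V) r s x k :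
  x \in Rset e r k -> path e x s -> last x s \in Rset e r (k + size s).
Proof.
elim: s x k => [|y s IH] x k /=; first by rewrite addn0.
move=> hx /andP [exy hp]; rewrite addnS -addSn; apply: IH hp.
rewrite /Rset iterS -/(Rset e r k) !inE; apply/orP; right.
by apply/existsP; exists x; rewrite hx.
Qed.

Lemma dist_exists (V : finType) (e : rel V) (r : V) (N : V -> seq V)
  (e_sym : symmetric e) (e_conn : forall x y : V, connect e x y)
  (N_adj : forall p q, (q \in N p) = e p q) :
  exists h : V -> nat, forall p, p != r -> exists2 q, q \in N p & (h q).+1 <= h p.
Proof.
have ex : forall p, exists k, p \in Rset e r k.
  move=> p; case/connectP: (e_conn r p) => s hs ->.
  by exists (0 + size s); apply: Rset_path => //; rewrite /Rset /= inE.
exists (fun p => ex_minn (ex p)) => p pr.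
case: ex_minnP => k hk hmin.
case: k hk hmin => [|k] hk hmin.
  by move: hk; rewrite /Rset /= inE (negbTE pr).
move: (hk); rewrite /Rset iterS -/(Rset e r k) !inE => /orP [h|].
  by have := hmin k h; rewrite ltnn.
case/existsP => x /andP [hx exp]; exists x; first by rewrite N_adj e_sym.
by case: ex_minnP => k' _ hm'; apply: hm'.
Qed.

Lemma step_changed (V : finType) (N : V -> seq V) (r : V) (g g' : config N) :
  Step r g g' -> cd g r = cd g' r ->
  forall q, cd g q != cd g' q -> q != r /\ cd g' q = Dist g q.
Proof.
case=> S [_ [_ HS]] Hr q hq.
case: (eqVneq q r) => [qr|qr]; first by move: hq; rewrite qr Hr eqxx.
have [Hd _] := HS q.
move: hq; rewrite Hd; case: (q \in S); last by rewrite eqxx.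
rewrite /exec_d (negbTE qr).
by case: (enabled_CD g q) => //; rewrite eqxx.
Qed.

Lemma DistF_ffun (V : finType) (N : V -> seq V) (g : config N) p :
  DistF N [ffun q => cd g q] p = Dist g p.
Proof.
have EF : [seq ([ffun q => cd g q] x).+1 | x <- N p] = [seq (cd g x).+1 | x <- N p].
  by apply: eq_map => x; rewrite ffunE.
by rewrite /DistF EF.
Qed.

Lemma wf_ltn : well_founded (fun x y : nat => x < y).
Proof.
move=> n; constructor; elim: n => [|n IH] m hm; first by [].
constructor => k hk; apply: IH; lia.
Qed.

Theorem proposition2 (V : finType) (e : rel V) (r : V) (N : V -> seq V)
  (e_sym : symmetric e) (e_irr : irreflexive e)
  (e_conn : forall x y : V, connect e x y)
  (N_uniq : forall p, uniq (N p))
  (N_adj : forall p q, (q \in N p) = e p q)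
  (g0 : config N) :
  exists (B : config N -> Prop) (D : Type) (Phi : config N -> D)
         (lt : D -> D -> Prop),
    [/\ B g0,
        (forall g g', B g -> (Step_d r g g' \/ Step_p r g g') -> B g'),
        (forall g g', (forall p, cd g p = cd g' p) -> Phi g = Phi g'),
        strict_wf_order lt
      & forall g g', B g -> Step_d r g g' -> lt (Phi g') (Phi g)].
Proof.
have [h hh] := @dist_exists V e r N e_sym e_conn N_adj.
pose K := \max_(p : V) cd g0 p.
pose H p := K + h p.
pose L := \max_(p : V) H p.
exists (fun g => forall p, cd g p <= H p), nat,
  (fun g => pot N r L [ffun p => cd g p]), (fun x y => x < y).
split.
- move=> p; apply: leq_trans (leq_addr (h p) K); exact: leq_bigmax.
- move=> g g' hB [[hS [hr _]] | [_ heq]] q; last by rewrite -heq.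
  case: (eqVneq (cd g q) (cd g' q)) => [<-//|hq].
  have [qr ->] := step_changed hS hr hq.
  have [x hx hxq] := hh q qr.
  apply: leq_trans (DistF_le _ hx) _.
  have := hB x; rewrite /H; lia.
- move=> g g' heq; have -> : [ffun p => cd g p] = [ffun p => cd g' p] by apply/ffunP => p; rewrite !ffunE.
  by [].
- split; first by move=> x; rewrite ltnn.
  split; first by move=> x y z; apply: ltn_trans.
  exact: wf_ltn.
- move=> g g' hB [hS [hr [p hp]]].
  apply: pot_step.
  + move=> q; rewrite !ffunE DistF_ffun; exact: step_changed hS hr q.
  + by exists p; rewrite !ffunE; apply/eqP.
  + move=> q; rewrite ffunE; apply: leq_trans (hB q) _; exact: leq_bigmax.
Qed.
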